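(* Let ${\mathscr X}$ be a Hausdorff space and ${\mathscr A}$ a set of finite Borel partitions of ${\mathscr X}$, directed under refinement, that resolves ${\mathscr X}$. For any Borel probability measures $P,Q$ on ${\mathscr X}$ with $P\ll Q$ and any $L>0$, $$\|P-P\wedge LQ\|_{1}=\sup_{\alpha\in{\mathscr A}}\|P_\alpha-P_\alpha\wedge LQ_\alpha\|_{1,\alpha}=\sup_{\alpha\in{\mathscr A}}\sum_{A\in\alpha}\bigl(P(A)-LQ(A)\bigr)_+ .$$
   Context: Partitions, refinement order and ''resolves'' are as usual: a partition is a finite collection of non-empty disjoint Borel sets covering ${\mathscr X}$; ${\mathscr A}$ resolves ${\mathscr X}$ if the sets in its partitions generate the Borel $\sigma$-algebra. For measures $\mu,\nu$, $\mu\wedge\nu$ is the largest measure dominated by both (so $\|P-P\wedge LQ\|_1=\int (p-L)_+\,dQ$ with $p=dP/dQ$). For histograms $P_\alpha=(P(A))_{A\in\alpha}$, $Q_\alpha=(Q(A))_{A\in\alpha}$, $P_\alpha\wedge LQ_\alpha$ is the componentwise minimum and $\|\cdot\|_{1,\alpha}$ is the $\ell^1$-norm over $A\in\alpha$. *)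

(* Defs.v *)
From HB Require Import structures.
From mathcomp Require Import all_boot all_order all_algebra.
From mathcomp Require Import all_classical all_reals all_analysis.
Set Implicit Arguments. Unset Strict Implicit. Unset Printing Implicit Defensive.
Import Order.TTheory GRing.Theory Num.Theory.
Local Open Scope classical_set_scope.
Local Open Scope ring_scope.

Definition borel_space (T : ptopologicalType) := g_sigma_algebraType (@open T).

Section defs.
Context d (X : measurableType d) (R : realType).

Definition is_partition (alpha : set (set X)) : Prop :=
  [/\ finite_set alpha,
      (forall A, alpha A -> measurable A /\ A !=set0),
      (forall A B, alpha A -> alpha B -> A `&` B !=set0 -> A = B)
    & \bigcup_(A in alpha) A = setT].

Definition refines (beta alpha : set (set X)) : Prop :=
  forall B, beta B -> exists2 A, alpha A & B `<=` A.

Definition directed_partitions (AA : set (set (set X))) : Prop :=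
  [/\ AA !=set0,
      (forall alpha, AA alpha -> is_partition alpha)
    & (forall alpha beta, AA alpha -> AA beta ->
         exists2 gamma, AA gamma & refines gamma alpha /\ refines gamma beta)].

Definition resolves (AA : set (set (set X))) : Prop :=
  <<s \bigcup_(alpha in AA) alpha >> = @measurable _ X.

Definition is_measure_meet (mu nu m : set X -> \bar R) : Prop :=
  [/\ (forall A, measurable A -> (m A <= mu A)%E),
      (forall A, measurable A -> (m A <= nu A)%E)
    & (forall m' : {measure set X -> \bar R},
         (forall A, measurable A -> (m' A <= mu A)%E) ->
         (forall A, measurable A -> (m' A <= nu A)%E) ->
         forall A, measurable A -> (m' A <= m A)%E)].

Definition tv_dist (mu nu : set X -> \bar R) : \bar R :=
  ereal_sup [set x | exists2 beta, is_partition beta &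
                       x = (\sum_(B \in beta) `|mu B - nu B|)%E].

Definition hist_dist (P Q : set X -> \bar R) (L : R) (alpha : set (set X)) : \bar R :=
  (\sum_(A \in alpha) `|P A - mine (P A) (L%:E * Q A)|)%E.

End defs.

(* Main.v *)
Require Import Defs.
From HB Require Import structures.
From mathcomp Require Import all_boot all_order all_algebra.
From mathcomp Require Import all_classical all_reals all_analysis.
From mathcomp Require Import ring lra.
Import Order.TTheory GRing.Theory Num.Theory.
Local Open Scope classical_set_scope.
Local Open Scope ring_scope.

Module Aux.
Set Implicit Arguments. Unset Strict Implicit.


Section finmeas.
Context d (X : measurableType d) (R : realType).
Variable mu : {measure set X -> \bar R}.
Hypothesis mufin : forall A, measurable A -> mu A \is a fin_num.

Lemma fmE A : measurable A -> mu A = (fine (mu A))%:E.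
Proof. by move=> mA; rewrite fineK// mufin. Qed.

Lemma fmono A B : measurable A -> measurable B -> A `<=` B ->
  fine (mu A) <= fine (mu B).
Proof.
move=> mA mB AB; rewrite -lee_fin -(fmE mA) -(fmE mB).
by apply: le_measure => //; rewrite inE.
Qed.

Lemma fsub A B : measurable A -> measurable B ->
  fine (mu (A `|` B)) <= fine (mu A) + fine (mu B).
Proof.
move=> mA mB; rewrite -lee_fin EFinD -(fmE (measurableU _ _ mA mB)) -(fmE mA) -(fmE mB).
exact: measureU2.
Qed.

Lemma fge0 A : 0 <= fine (mu A).
Proof. exact: fine_ge0. Qed.

End finmeas.

Fixpoint psU (T : Type) (F : nat -> set T) n :=
  if n is n'.+1 then psU F n' `|` F n else F 0%N.

Section approx.
Context d (X : measurableType d) (R : realType).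
Variable AA : set (set (set X)).
Hypothesis hdir : directed_partitions AA.
Hypothesis hres : resolves AA.
Variable mu : {measure set X -> \bar R}.
Hypothesis mufin : forall A, measurable A -> mu A \is a fin_num.

Definition amea (al : set (set X)) (D : set X) :=
  forall B, al B -> B `<=` D \/ B `<=` ~` D.
Definition sdf (D S : set X) := (D `\` S) `|` (S `\` D).

Definition good (S : set X) := measurable S /\
  forall e : R, 0 < e -> exists2 al, AA al & exists D,
    [/\ measurable D, amea al D & fine (mu (sdf D S)) < e].

Lemma amea_ref g al D : refines g al -> amea al D -> amea g D.
Proof.
move=> gal aD B gB; have [A alA BA] := gal B gB.
by case: (aD A alA) => h; [left|right]; exact: subset_trans h.
Qed.

Lemma msdf D S : measurable D -> measurable S -> measurable (sdf D S).
Proof. by move=> mD mS; apply: measurableU; apply: measurableD. Qed.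

Lemma good0 : good set0.
Proof.
split => // e e0; have [[al AAal] _ _] := hdir.
exists al => //; exists set0; split => //.
- by move=> B _; right => x _ [].
- by rewrite /sdf !set0D setU0 measure0 /=.
Qed.

Lemma goodC S : good S -> good (setT `\` S).
Proof.
move=> [mS gS]; split; first exact: measurableD.
move=> e e0; have [al AAal [D [mD aD De]]] := gS e e0.
exists al => //; exists (~` D); split.
- exact: measurableC.
- by move=> B /aD[h|h]; [right; rewrite setCK|left].
- suff -> : sdf (~` D) (setT `\` S) = sdf D S by [].
  rewrite /sdf; apply/seteqP; split => x /=; have := EM (D x); have := EM (S x); tauto.
Qed.

Lemma goodU S1 S2 : good S1 -> good S2 -> good (S1 `|` S2).
Proof.
move=> [m1 g1] [m2 g2]; split; first exact: measurableU.
move=> e e0; have e20 : 0 < e / 2 by rewrite divr_gt0.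
have [a1 A1 [D1 [mD1 aD1 D1e]]] := g1 _ e20.
have [a2 A2 [D2 [mD2 aD2 D2e]]] := g2 _ e20.
have [_ _ h] := hdir; have [g Ag [ga1 ga2]] := h _ _ A1 A2.
exists g => //; exists (D1 `|` D2); split.
- exact: measurableU.
- move=> B gB; have [h1|h1] := amea_ref ga1 aD1 gB; first by left => x /h1; left.
  have [h2|h2] := amea_ref ga2 aD2 gB; first by left => x /h2; right.
  by right => x Bx [/(h1 _ Bx)|/(h2 _ Bx)].
- have ms1 := msdf mD1 m1; have ms2 := msdf mD2 m2.
  apply: (le_lt_trans (fmono mufin (msdf (measurableU _ _ mD1 mD2) (measurableU _ _ m1 m2))
     (measurableU _ _ ms1 ms2) _)).
    rewrite /sdf => x /=; have := EM (D1 x); have := EM (S1 x);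
      have := EM (D2 x); have := EM (S2 x); tauto.
  apply: (le_lt_trans (fsub mufin ms1 ms2)).
  lra.
Qed.

Lemma goodB (F : (set X)^nat) : (forall n, good (F n)) -> good (\bigcup_n F n).
Proof.
move=> gF; have mF n : measurable (F n) by case: (gF n).
have mS : measurable (\bigcup_n F n) by exact: bigcupT_measurable.
split => // e e0.
pose T := psU F.
have gT n : good (T n).
  by elim: n => [|n ih] /=; [exact: gF | exact: goodU].
have mT n : measurable (T n) by case: (gT n).
have TS : \bigcup_n T n = \bigcup_n F n.
  apply/seteqP; split => x [n _]; last first.
    move=> Fx; exists n => //; case: n Fx => [//|n] Fx /=; by right.
  elim: n => [|n ih] /=; first by move=> h; exists 0%N.
  by case=> [/ih//|h]; exists n.+1.
have ndT : nondecreasing_seq T.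
  move=> n m nm; rewrite subsetEset.
  elim: m nm => [|m ih]; first by rewrite leqn0 => /eqP ->.
  rewrite leq_eqVlt => /orP[/eqP ->//|]; rewrite ltnS => /ih h.
  by apply: subset_trans h _ => x Tx /=; left.
have mU : measurable (\bigcup_n T n) by rewrite TS.
have cv1 := nondecreasing_cvg_mu (mu:=mu) mT mU ndT.
rewrite TS in cv1.
have ndmu : nondecreasing_seq (mu \o T).
  move=> n m nm; apply: le_measure; rewrite ?inE //.
  by have := ndT _ _ nm; rewrite subsetEset.
have cv2 := ereal_nondecreasing_cvgn ndmu.
have supE : mu (\bigcup_n F n) = ereal_sup (range (mu \o T)).
  exact: (cvg_unique _ cv1 cv2).
have e20 : 0 < e / 2 by rewrite divr_gt0.
have : ((fine (mu (\bigcup_n F n)) - e / 2)%:E < ereal_sup (range (mu \o T)))%E.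
  by rewrite -supE (fmE mufin mS) lte_fin ltrBlDr ltrDl.
move=> /ereal_sup_gt [y [N _ <-]] /=; rewrite (fmE mufin (mT N)) lte_fin => hN.
have [al Aal [D [mD aD De]]] := (gT N).2 _ e20.
exists al => //; exists D; split => //.
have TNS : T N `<=` \bigcup_n F n by rewrite -TS => x TNx; exists N.
have mSD := measurableD mS (mT N).
have hU : mu (\bigcup_n F n) = (mu (T N) + mu (\bigcup_n F n `\` T N))%E.
  by rewrite -{1}(setDUK TNS); apply: measureU => //; rewrite setDIK.
rewrite (fmE mufin mS) (fmE mufin (mT N)) (fmE mufin mSD) -EFinD in hU.
case: hU => hU.
apply: (le_lt_trans (fmono mufin (msdf mD mS) (measurableU _ _ (msdf mD (mT N)) mSD) _)).
  rewrite /sdf => x /=; have := EM (D x); have := EM (T N x);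
      have := EM ((\bigcup_n F n) x); have := TNS x; tauto.
apply: (le_lt_trans (fsub mufin (msdf mD (mT N)) mSD)).
lra.
Qed.

Lemma goodblock al A : AA al -> al A -> good A.
Proof.
move=> Aal alA; have [_ hp _] := hdir; have [_ hm hdis _] := hp _ Aal.
have [mA _] := hm _ alA.
split => // e e0; exists al => //; exists A; split => //.
- move=> B alB; case: (pselect (B `&` A !=set0)) => h.
    by left; rewrite (hdis _ _ alB alA h).
  by right => x Bx Ax; apply: h; exists x.
- by rewrite /sdf setDv setU0 measure0.
Qed.

Lemma approx_good S : measurable S -> good S.
Proof.
rewrite -hres => mS.
have sig : sigma_algebra setT good.
  by split; [exact: good0 | move=> A; exact: goodC | move=> F; exact: goodB].
apply: (smallest_sub sig _ mS).
by move=> A [al Aal alA]; exact: goodblock Aal alA.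
Qed.

End approx.


Lemma minmax (R : realType) (a b : R) : a - Num.min a b = Num.max (a - b) 0.
Proof. rewrite /Num.min /Num.max; case: ltP => h1; case: ltP => h2; lra. Qed.

Lemma ler_fsum (R : realType) (I : choiceType) (S : set I) (a b : I -> R) :
  finite_set S -> (forall i, S i -> a i <= b i) ->
  \sum_(i \in S) a i <= \sum_(i \in S) b i.
Proof.
move=> fS ab; rewrite -lee_fin -!fsumEFin //; by apply: lee_fsum => // i Si.
Qed.

Lemma fsumB (R : realType) (I : choiceType) (S : set I) (a b : I -> R) :
  finite_set S -> \sum_(i \in S) (a i - b i) = \sum_(i \in S) a i - \sum_(i \in S) b i.
Proof. by move=> fS; rewrite !fsbig_finite //= sumrB. Qed.

Section part.
Context d (X : measurableType d) (R : realType).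

Lemma psum (mu : {measure set X -> \bar R}) al : is_partition al ->
  (\sum_(A \in al) mu A = mu setT)%E.
Proof.
case=> fal hm hdis cov; rewrite -cov measure_fin_bigcup //.
by move=> A /hm[].
Qed.

Lemma psumr (mu : {measure set X -> \bar R}) al :
  (forall A, measurable A -> mu A \is a fin_num) -> is_partition al ->
  \sum_(A \in al) fine (mu A) = fine (mu setT).
Proof.
move=> mufin hal; have [fal hm _ _] := hal.
have := psum mu hal.
rewrite (eq_fsbigr (fun A => (fine (mu A))%:E)); last first.
  by move=> A; rewrite in_setE => /hm[mA _]; rewrite fineK // mufin.
by rewrite fsumEFin // => <-.
Qed.
End part.

Section main.
Context d (X : measurableType d) (R : realType) (P Q : probability X R) (L : R) (hL : 0 < L).

Definition nu := cadd (charge_of_finite_measure P) (cscale (-L) (charge_of_finite_measure Q)).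
Lemma nuE A : nu A = (P A + (-L)%:E * Q A)%E. Proof. by []. Qed.

Variables (Pos N : set X) (hPN : hahn_decomposition nu Pos N).

Lemma mPos : measurable Pos. Proof. by case: hPN => -[]. Qed.
Lemma mN : measurable N. Proof. by case: hPN => _ []. Qed.

Lemma PE A : measurable A -> P A = (fine (P A))%:E.
Proof. by move=> mA; rewrite fineK // fin_num_measure. Qed.
Lemma QE A : measurable A -> Q A = (fine (Q A))%:E.
Proof. by move=> mA; rewrite fineK // fin_num_measure. Qed.

Lemma F1 A : measurable A -> L * fine (Q (A `&` Pos)) <= fine (P (A `&` Pos)).
Proof.
move=> mA; have mAP : measurable (A `&` Pos) := measurableI _ _ mA mPos.
case: hPN => -[_ posP] _ _ _.
have : (0 <= nu (A `&` Pos))%E := posP _ mAP (@subIsetr _ _ _).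
rewrite nuE (PE mAP) (QE mAP) -EFinM -EFinD lee_fin mulNr.
lra.
Qed.

Lemma F2 A : measurable A -> fine (P (A `&` N)) <= L * fine (Q (A `&` N)).
Proof.
move=> mA; have mAN : measurable (A `&` N) := measurableI _ _ mA mN.
case: hPN => _ -[_ negN] _ _.
have : (nu (A `&` N) <= 0)%E := negN _ mAN (@subIsetr _ _ _).
rewrite nuE (PE mAN) (QE mAN) -EFinM -EFinD lee_fin mulNr.
lra.
Qed.

Lemma decomp (mu : {measure set X -> \bar R}) A : measurable A ->
  mu A = (mu (A `&` N) + mu (A `&` Pos))%E.
Proof.
move=> mA; case: hPN => _ _ PN PN0.
rewrite [in LHS](_ : A = (A `&` N) `|` (A `&` Pos)); last first.
  by rewrite -setIUr setUC PN setIT.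
apply: measureU; [exact: measurableI mA mN|exact: measurableI mA mPos|].
by rewrite setIACA setIid [N `&` _]setIC PN0 setI0.
Qed.

Definition m0 : {measure set X -> \bar R} :=
  measure_add (mrestr P mN) (mscale (NngNum (ltW hL)) (mrestr Q mPos)).

Lemma m0E A : m0 A = (P (A `&` N) + L%:E * Q (A `&` Pos))%E.
Proof. exact: measure_addE. Qed.

Lemma m0_meet : is_measure_meet P (fun A => L%:E * Q A)%E m0.
Proof.
split.
- move=> A mA; rewrite m0E.
  have mAN := measurableI _ _ mA mN; have mAP := measurableI _ _ mA mPos.
  have e : P A = (P (A `&` N) + P (A `&` Pos))%E := decomp P mA.
  rewrite e (PE mAN) (PE mAP) (QE mAP) -?EFinM -?EFinD lee_fin.
  have := F1 mA; lra.
- move=> A mA; rewrite m0E.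
  have mAN := measurableI _ _ mA mN; have mAP := measurableI _ _ mA mPos.
  have e : Q A = (Q (A `&` N) + Q (A `&` Pos))%E := decomp Q mA.
  rewrite e (PE mAN) (QE mAN) (QE mAP) -?EFinD -?EFinM -?EFinD lee_fin mulrDr.
  have := F2 mA; lra.
- move=> m' h1 h2 A mA; rewrite m0E (decomp m' mA).
  apply: leeD; [exact: h1 (measurableI _ _ mA mN) | exact: h2 (measurableI _ _ mA mPos)].
Qed.

Lemma main_part (AA : set (set (set X))) (hdir : directed_partitions AA)
  (hres : resolves AA) (m : {measure set X -> \bar R}) :
  is_measure_meet P (fun A => L%:E * Q A)%E m ->
  tv_dist P m = ereal_sup [set x | exists2 alpha, AA alpha & x = hist_dist P Q L alpha] /\
  ereal_sup [set x | exists2 alpha, AA alpha & x = hist_dist P Q L alpha] =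
  ereal_sup [set x | exists2 alpha, AA alpha &
                 x = (\sum_(A \in alpha) maxe (P A - L%:E * Q A) 0)%E].
Proof.
move=> [h1 h2 h3].
have [[al0 Aal0] hpart _] := hdir.
have Pfin A : measurable A -> P A \is a fin_num := fin_num_measure P A.
have Qfin A : measurable A -> Q A \is a fin_num := fin_num_measure Q A.
have mfin A : measurable A -> m A \is a fin_num.
  move=> mA; rewrite ge0_fin_numE ?measure_ge0 //.
  by apply: (le_lt_trans (h1 _ mA)); rewrite (PE mA) ltry.
have [n0 n1 n2] := m0_meet.
have mX : m setT = m0 setT.
  apply/eqP; rewrite eq_le; apply/andP; split.
  - exact: n2 h1 h2 _ measurableT.
  - exact: h3 n0 n1 _ measurableT.
have MN : fine (m setT) = fine (P N) + L * fine (Q Pos).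
  by rewrite mX m0E !setTI (PE mN) (QE mPos) -EFinM -EFinD.
pose hr al := \sum_(A \in al) (fine (P A) - Num.min (fine (P A)) (L * fine (Q A))).
have H1 al : AA al -> hist_dist P Q L al = (hr al)%:E.
  move=> Aal; have [fal hm _ _] := hpart _ Aal.
  rewrite /hist_dist /hr -fsumEFin //; apply: eq_fsbigr => A; rewrite in_setE => /hm[mA _].
  rewrite (PE mA) (QE mA) -EFinM -EFin_min -EFinB abse_EFin ger0_norm //.
  by rewrite subr_ge0 ge_min lexx.
have H2 al : AA al -> (\sum_(A \in al) maxe (P A - L%:E * Q A) 0)%E = (hr al)%:E.
  move=> Aal; have [fal hm _ _] := hpart _ Aal.
  rewrite /hr -fsumEFin //; apply: eq_fsbigr => A; rewrite in_setE => /hm[mA _].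
  rewrite (PE mA) (QE mA) -EFinM -EFinB -[0%E]/(0%:E) -EFin_max.
  by rewrite minmax.
have SE : [set x | exists2 alpha, AA alpha & x = hist_dist P Q L alpha] =
          [set x | exists2 alpha, AA alpha & x = (hr alpha)%:E].
  by apply/seteqP; split => x [al Aal ->]; exists al => //; rewrite H1.
have SE2 : [set x | exists2 alpha, AA alpha &
                 x = (\sum_(A \in alpha) maxe (P A - L%:E * Q A) 0)%E] =
          [set x | exists2 alpha, AA alpha & x = (hr alpha)%:E].
  by apply/seteqP; split => x [al Aal ->]; exists al => //; rewrite H2.
have tvE be : is_partition be ->
    (\sum_(B \in be) `|P B - m B|)%E = (fine (P setT) - fine (m setT))%:E.
  move=> hbe; have [fbe hm _ _] := hbe.
  rewrite (eq_fsbigr (fun B => (fine (P B) - fine (m B))%:E)); last first.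
    move=> B; rewrite in_setE => /hm[mB _].
    rewrite (PE mB) -[m B](fineK (mfin _ mB)) -EFinB abse_EFin ger0_norm //.
    by rewrite subr_ge0 -lee_fin fineK ?mfin // -PE //; exact: h1.
  rewrite fsumEFin // fsumB //.
  have eP : \sum_(A \in be) fine (P A) = fine (P setT) := psumr Pfin hbe.
  have em : \sum_(A \in be) fine (m A) = fine (m setT) := psumr mfin hbe.
  by rewrite eP em.
have TV : tv_dist P m = (fine (P setT) - fine (m setT))%:E.
  rewrite /tv_dist.
  rewrite [X in ereal_sup X](_ : _ = [set (fine (P setT) - fine (m setT))%:E]) ?ereal_sup1 //.
  apply/seteqP; split => x /=; first by move=> [be hbe ->]; exact: tvE.
  by move=> ->; exists al0; [exact: hpart | rewrite tvE //; exact: hpart].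
have ub al : AA al -> hr al <= fine (P setT) - fine (m setT).
  move=> Aal; have hal := hpart _ Aal; have [fal hm _ _] := hal.
  have eP : \sum_(A \in al) fine (P A) = fine (P setT) := psumr Pfin hal.
  have em : \sum_(A \in al) fine (m A) = fine (m setT) := psumr mfin hal.
  have le : \sum_(A \in al) fine (m A) <=
            \sum_(A \in al) Num.min (fine (P A)) (L * fine (Q A)).
    apply: ler_fsum => // A alA; have [mA _] := hm _ alA.
    rewrite le_min; apply/andP; split.
    - by rewrite -lee_fin -PE // fineK ?mfin //; exact: h1.
    - by rewrite -lee_fin EFinM -QE // fineK ?mfin //; exact: h2.
  rewrite /hr fsumB // eP; lra.
have lb e : 0 < e -> exists2 al, AA al & fine (P setT) - fine (m setT) <= hr al + e.
  move=> e0.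
  have mufin A : measurable A -> measure_add P Q A \is a fin_num.
    by move=> mA; rewrite measure_addE fin_numD !fin_num_measure.
  have L1 : 0 < 1 + L by rewrite addr_gt0.
  have eps0 : 0 < e / (1 + L) by rewrite divr_gt0.
  have [_ gN] := approx_good hdir hres mufin mN.
  have [al Aal [D [mD aD De]]] := gN _ eps0.
  exists al => //.
  have hal := hpart _ Aal; have [fal hm _ _] := hal.
  have mS := msdf mD mN.
  have mDc : measurable (~` D) := measurableC mD.
  have De' : fine (P (sdf D N)) + fine (Q (sdf D N)) < e / (1 + L).
    have -> : fine (P (sdf D N)) + fine (Q (sdf D N)) = fine (measure_add P Q (sdf D N)).
      by rewrite measure_addE fineD // fin_num_measure.
    exact: De.
  have pS0 : 0 <= fine (P (sdf D N)) := fge0 _ _.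
  have qS0 : 0 <= fine (Q (sdf D N)) := fge0 _ _.
  have eP : \sum_(A \in al) fine (P A) = fine (P setT) := psumr Pfin hal.
  have finD A : measurable A -> mrestr P mD A \is a fin_num.
    by move=> mA; apply: Pfin; exact: measurableI.
  have finDc A : measurable A -> mrestr Q mDc A \is a fin_num.
    by move=> mA; apply: Qfin; exact: measurableI.
  have eD : \sum_(A \in al) fine (P (A `&` D)) = fine (P (setT `&` D)) := psumr finD hal.
  have eDc : \sum_(A \in al) fine (Q (A `&` ~` D)) = fine (Q (setT `&` ~` D)) := psumr finDc hal.
  rewrite !setTI in eD eDc.
  have le : \sum_(A \in al) Num.min (fine (P A)) (L * fine (Q A)) <=
            \sum_(A \in al) (fine (P (A `&` D)) + L * fine (Q (A `&` ~` D))).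
    apply: ler_fsum => // A alA; have [mA _] := hm _ alA.
    case: (aD A alA) => hA.
    - rewrite (setIidl hA) (_ : A `&` ~` D = set0); last exact: (proj1 (subsets_disjoint _ _) hA).
      by rewrite measure0 /= mulr0 addr0 ge_min lexx.
    - rewrite (setIidl hA) (_ : A `&` D = set0); last by have := proj1 (subsets_disjoint _ _) hA; rewrite setCK.
      by rewrite measure0 /= add0r ge_min lexx orbT.
  rewrite fsbig_split // -mulr_fsumr eD eDc in le.
  have hpD : fine (P D) <= fine (P N) + fine (P (sdf D N)).
    apply: (le_trans _ (fsub Pfin mN mS)).
    apply: (fmono (mu:=P) Pfin mD (measurableU _ _ mN mS)).
    by move=> x Dx; have [xN|xN] := EM (N x); [left|right; left].
  case: hPN => _ _ PN _.
  have hqD : fine (Q (~` D)) <= fine (Q Pos) + fine (Q (sdf D N)).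
    apply: (le_trans _ (fsub Qfin mPos mS)).
    apply: (fmono (mu:=Q) Qfin mDc (measurableU _ _ mPos mS)).
    move=> x Dx; have [xP|xP] := EM (Pos x); [by left|right; right; split => //].
    have : (Pos `|` N) x by rewrite PN.
    by case.
  have hqD' : L * fine (Q (~` D)) <= L * fine (Q Pos) + L * fine (Q (sdf D N)).
    by rewrite -mulrDr ler_wpM2l // ltW.
  have hqS : L * fine (Q (sdf D N)) <= L * (e / (1 + L)).
    by rewrite ler_wpM2l ?ltW //; lra.
  have hE : e / (1 + L) + L * (e / (1 + L)) = e.
    by field; rewrite lt0r_neq0.
  change (is_true (\sum_(A \in al) Num.min (fine (P A)) (L * fine (Q A)) <= fine (P D) + L * fine (Q (~` D)))) in le.
  rewrite /hr fsumB // eP MN; lra.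
have SUP : ereal_sup [set x | exists2 alpha, AA alpha & x = (hr alpha)%:E] =
           (fine (P setT) - fine (m setT))%:E.
  apply/eqP; rewrite eq_le; apply/andP; split.
  - by apply: ge_ereal_sup => x [al Aal ->]; rewrite lee_fin; exact: ub.
  - apply/lee_addgt0Pr => e e0; have [al Aal hal] := lb e e0.
    apply: (@le_trans _ _ ((hr al)%:E + e%:E)%E); first by rewrite -EFinD lee_fin.
    by apply: leeD2r; apply: ereal_sup_ubound; exists al.
by rewrite TV SE SE2 SUP.
Qed.

End main.

End Aux.
Import Aux.

Theorem mainTheorem3 (R : realType) (T : ptopologicalType)
  (hT : hausdorff_space T)
  (AA : set (set (set (borel_space T))))
  (hdir : directed_partitions AA) (hres : resolves AA)
  (P Q : probability (borel_space T) R) (hPQ : P `<< Q)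
  (L : R) (hL : 0 < L) :
  (exists m : {measure set (borel_space T) -> \bar R},
      is_measure_meet P (fun A => L%:E * Q A)%E m) /\
  forall m : {measure set (borel_space T) -> \bar R},
    is_measure_meet P (fun A => L%:E * Q A)%E m ->
    tv_dist P m = ereal_sup [set x | exists2 alpha, AA alpha & x = hist_dist P Q L alpha] /\
    ereal_sup [set x | exists2 alpha, AA alpha & x = hist_dist P Q L alpha] =
    ereal_sup [set x | exists2 alpha, AA alpha &
                 x = (\sum_(A \in alpha) maxe (P A - L%:E * Q A) 0)%E].
Proof.
have [Pos [N hPN]] := Hahn_decomposition (nu P Q L).
split; first by exists (m0 hL hPN); exact: m0_meet.
by move=> m hm; exact: (main_part hL hPN hdir hres hm).
Qed.
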